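(* With the notation below, the map $\psi\colon L_{\mathbb{R}}\to\mathbb{Z}^6$ defined by $\psi(\iota_{\mathbb{R}}(\bm q))=\lceil(\gamma(\bm q),-\gamma(\bm q))\rceil$ (componentwise ceiling) for all $\bm q\in\mathbb{R}^2$ is a compatible $\mathbb{Z}^6$-stratification of $L_{\mathbb{R}}$ with the cell structure described below.
   Context: Let $L\subseteq\mathbb{Z}^6$ be the lattice generated by $(1,-1,0,-1,1,0)$ and $(0,-1,1,0,1,-1)$ (the lattice of the diagonal embedding $\mathbb{P}^2\to\mathbb{P}^2\times\mathbb{P}^2$), $\iota\colon\mathbb{Z}^2\to L$ the isomorphism sending the standard basis to these generators, $\iota_{\mathbb{R}}\colon\mathbb{R}^2\to\mathbb{R}^6$ its linear extension, with image $L_{\mathbb{R}}=L\otimes\mathbb{R}$. Let $\mathcal S\subseteq\mathbb{R}^3$ (the staircase surface) be the closure of $\{\bm p\in\mathbb{R}^3:\lceil p_1\rceil+\lceil p_2\rceil+\lceil p_3\rceil=0$ and at least one $p_i\in\mathbb{Z}\}$, with the polyhedral cell structure given by its intersection with the periodic arrangement of hyperplanes $\{p_i=j\}$, $i=1,2,3$, $j\in\mathbb{Z}$ (maximal cells are unit squares). Define $\gamma\colon\mathbb{R}^2\to\mathcal S$ by sending $\bm q=(q_1,q_2)$ to $(q_1,-q_1-q_2,q_2)\in\mathbb{R}^3$ and then projecting onto $\mathcal S$ along the direction $(1,1,1)$ (i.e., $\gamma(\bm q)$ is the point of $\mathcal S$ on the line $(q_1,-q_1-q_2,q_2)+\mathbb{R}(1,1,1)$);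 $\gamma$ is a homeomorphism, and $\iota(\bm u)=(\gamma(\bm u),-\gamma(\bm u))$ for $\bm u\in\mathbb{Z}^2$. The cell structure on $L_{\mathbb{R}}$ is the one transported from $\mathcal S$ via the homeomorphism $\iota_{\mathbb{R}}\circ\gamma^{-1}$ (equivalently, projecting $\mathcal S$ along $(1,1,1)$); it is $L$-equivariant. Give $\mathbb{Z}^6$ the componentwise order and Alexandrov topology (open = up-closed). A compatible $\mathbb{Z}^6$-stratification is a continuous map $\psi\colon L_{\mathbb{R}}\to\mathbb{Z}^6$, constant on each open cell, with $\psi(\bm p+\bm v)=\psi(\bm p)+\bm v$ for all $\bm p\in L_{\mathbb{R}}$, $\bm v\in L$. *)

(* Defs.v *)
From Stdlib Require Import Reals ZArith ClassicalEpsilon.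
Open Scope R_scope.

Record V3 (A : Type) := mkV3 { x1 : A; x2 : A; x3 : A }.
Record V6 (A : Type) := mkV6 { e1 : A; e2 : A; e3 : A; e4 : A; e5 : A; e6 : A }.
Arguments mkV3 {A}. Arguments x1 {A}. Arguments x2 {A}. Arguments x3 {A}.
Arguments mkV6 {A}. Arguments e1 {A}. Arguments e2 {A}. Arguments e3 {A}.
Arguments e4 {A}. Arguments e5 {A}. Arguments e6 {A}.

(* ceiling of a real number: ceil x = - floor (- x), floor = Int_part *)
Definition ceilZ (x : R) : Z := (- Int_part (- x))%Z.

Definition isInt (x : R) : Prop := exists z : Z, x = IZR z.

(* ---------- Z^6 with componentwise order (Alexandrov topology: open = up-closed) *)
Definition leZ6 (x y : V6 Z) : Prop :=
  (e1 x <= e1 y)%Z /\ (e2 x <= e2 y)%Z /\ (e3 x <= e3 y)%Z /\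
  (e4 x <= e4 y)%Z /\ (e5 x <= e5 y)%Z /\ (e6 x <= e6 y)%Z.

Definition up_closed (U : V6 Z -> Prop) : Prop :=
  forall x y, U x -> leZ6 x y -> U y.

Definition addZ6 (x y : V6 Z) : V6 Z :=
  mkV6 (e1 x + e1 y)%Z (e2 x + e2 y)%Z (e3 x + e3 y)%Z
       (e4 x + e4 y)%Z (e5 x + e5 y)%Z (e6 x + e6 y)%Z.

Definition realZ6 (v : V6 Z) : V6 R :=
  mkV6 (IZR (e1 v)) (IZR (e2 v)) (IZR (e3 v)) (IZR (e4 v)) (IZR (e5 v)) (IZR (e6 v)).

Definition addR6 (x y : V6 R) : V6 R :=
  mkV6 (e1 x + e1 y) (e2 x + e2 y) (e3 x + e3 y)
       (e4 x + e4 y) (e5 x + e5 y) (e6 x + e6 y).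

(* sup-distance on R^6 (induces the Euclidean topology) *)
Definition dist6 (x y : V6 R) : R :=
  Rmax (Rmax (Rmax (Rabs (e1 x - e1 y)) (Rabs (e2 x - e2 y))) (Rabs (e3 x - e3 y)))
       (Rmax (Rmax (Rabs (e4 x - e4 y)) (Rabs (e5 x - e5 y))) (Rabs (e6 x - e6 y))).

Definition iotaZ (a b : Z) : V6 Z :=
  mkV6 a (- a - b)%Z b (- a)%Z (a + b)%Z (- b)%Z.
Definition inL (v : V6 Z) : Prop := exists a b : Z, v = iotaZ a b.

Definition iotaR (q1 q2 : R) : V6 R :=
  mkV6 q1 (- q1 - q2) q2 (- q1) (q1 + q2) (- q2).
Definition inLR (p : V6 R) : Prop := exists q1 q2 : R, p = iotaR q1 q2.

Definition open_in_LR (A : V6 R -> Prop) : Prop :=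
  forall p, A p -> inLR p ->
    exists eps, 0 < eps /\ forall p', inLR p' -> dist6 p p' < eps -> A p'.

Definition stair_pre (p : V3 R) : Prop :=
  (ceilZ (x1 p) + ceilZ (x2 p) + ceilZ (x3 p) = 0)%Z /\
  (isInt (x1 p) \/ isInt (x2 p) \/ isInt (x3 p)).

Definition closure3 (A : V3 R -> Prop) (p : V3 R) : Prop :=
  forall eps, 0 < eps -> exists a, A a /\
    Rabs (x1 a - x1 p) < eps /\ Rabs (x2 a - x2 p) < eps /\ Rabs (x3 a - x3 p) < eps.

Definition staircase (p : V3 R) : Prop := closure3 stair_pre p.

Definition gamma_t (q1 q2 : R) : R :=
  epsilon (inhabits 0%R)
    (fun t => staircase (mkV3 (q1 + t) (- q1 - q2 + t) (q2 + t))).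

Definition gamma (q1 q2 : R) : V3 R :=
  let t := gamma_t q1 q2 in mkV3 (q1 + t) (- q1 - q2 + t) (q2 + t).

(* open face of the periodic arrangement {p_i = j}: for each i, either
   p_i = a_i (fixed_i = true) or a_i < p_i < a_i + 1 (fixed_i = false) *)
Definition coord_face (a : Z) (fixed : bool) (x : R) : Prop :=
  if fixed then x = IZR a else IZR a < x < IZR a + 1.

Definition arr_face (a : V3 Z) (f : V3 bool) (p : V3 R) : Prop :=
  coord_face (x1 a) (x1 f) (x1 p) /\ coord_face (x2 a) (x2 f) (x2 p) /\
  coord_face (x3 a) (x3 f) (x3 p).

(* open cell of S: S ∩ (open face); transported to L_R via iota_R ∘ gamma^{-1} *)
Definition LR_open_cell (a : V3 Z) (f : V3 bool) (p : V6 R) : Prop :=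
  exists q1 q2, p = iotaR q1 q2 /\ staircase (gamma q1 q2) /\ arr_face a f (gamma q1 q2).

Definition compatible_stratification (psi : V6 R -> V6 Z) : Prop :=
  (forall U, up_closed U -> open_in_LR (fun p => U (psi p))) /\
  (forall a f p p', LR_open_cell a f p -> LR_open_cell a f p' -> psi p = psi p') /\
  (forall p v, inLR p -> inL v -> psi (addR6 p (realZ6 v)) = addZ6 (psi p) v).

(* Main.v *)
Require Import Defs.
From Stdlib Require Import Reals ZArith Lra Lia Classical ClassicalEpsilon.
Open Scope R_scope.

Ltac zr := repeat (first [rewrite plus_IZR in * | rewrite minus_IZR in * | rewrite opp_IZR in *]).

Lemma ceil_spec x : IZR (ceilZ x) - 1 < x <= IZR (ceilZ x).
Proof. unfold ceilZ. rewrite opp_IZR. destruct (base_Int_part (- x)). lra. Qed.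

Lemma floor_spec x : IZR (Int_part x) <= x < IZR (Int_part x) + 1.
Proof. destruct (base_Int_part x). lra. Qed.

Lemma ltZ a b : IZR a < IZR b -> (a < b)%Z.
Proof. apply lt_IZR. Qed.

Lemma ceil_unique x z : IZR z - 1 < x <= IZR z -> ceilZ x = z.
Proof.
  intros H. destruct (ceil_spec x).
  assert (ceilZ x < z + 1)%Z by (apply ltZ; zr; lra).
  assert (z < ceilZ x + 1)%Z by (apply ltZ; zr; lra). lia.
Qed.

Lemma floor_unique x z : IZR z <= x < IZR z + 1 -> Int_part x = z.
Proof.
  intros H. destruct (floor_spec x).
  assert (Int_part x < z + 1)%Z by (apply ltZ; zr; lra).
  assert (z < Int_part x + 1)%Z by (apply ltZ; zr; lra). lia.
Qed.

Lemma lt_floor_ceil x y : x < y -> (Int_part x + 1 <= ceilZ y)%Z.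
Proof.
  intros H. destruct (floor_spec x), (ceil_spec y).
  assert (Int_part x < ceilZ y)%Z by (apply ltZ; lra). lia.
Qed.

Lemma ceil_lsc x y : IZR (ceilZ x) - 1 < y -> (ceilZ x <= ceilZ y)%Z.
Proof.
  intros H. destruct (ceil_spec y).
  assert (ceilZ x < ceilZ y + 1)%Z by (apply ltZ; zr; lra). lia.
Qed.

Lemma ceil_le z y : y <= IZR z -> (ceilZ y <= z)%Z.
Proof.
  intros H. destruct (ceil_spec y).
  assert (ceilZ y < z + 1)%Z by (apply ltZ; zr; lra). lia.
Qed.

Lemma ceil_IZR n : ceilZ (IZR n) = n.
Proof. apply ceil_unique. lra. Qed.

Lemma ceil_addZ x n : ceilZ (x + IZR n) = (ceilZ x + n)%Z.
Proof. apply ceil_unique. destruct (ceil_spec x). zr. lra. Qed.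

Lemma floor_addZ x n : Int_part (x + IZR n) = (Int_part x + n)%Z.
Proof. apply floor_unique. destruct (floor_spec x). zr. lra. Qed.

Definition Fv (p : V3 R) : Z := (ceilZ (x1 p) + ceilZ (x2 p) + ceilZ (x3 p))%Z.
Definition Hv (p : V3 R) : Z := (Int_part (x1 p) + Int_part (x2 p) + Int_part (x3 p) + 3)%Z.
Definition good p := (Fv p <= 0 < Hv p)%Z.

Lemma int_ind y : exists c : bool, (c = true -> isInt y) /\
  ceilZ y = (Int_part y + 1 - Z.b2z c)%Z /\
  (c = true -> forall eta, 0 < eta < 1 -> ceilZ (y + eta) = (ceilZ y + 1)%Z).
Proof.
  destruct (floor_spec y).
  destruct (classic (y = IZR (Int_part y))) as [E|N].
  - assert (Hc : ceilZ y = Int_part y) by (apply ceil_unique; lra).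
    exists true. split; [intros; exists (Int_part y); exact E|]. split.
    + rewrite Hc. simpl. lia.
    + intros _ eta He. apply ceil_unique. rewrite Hc. zr. lra.
  - exists false. split; [discriminate|]. split.
    + apply ceil_unique. simpl Z.b2z. assert (IZR (Int_part y) < y) by (destruct H; [auto|congruence]). zr. idtac. lra.
    + discriminate.
Qed.

Lemma comb (c1 c2 c3 : bool) (m : Z) : (0 <= m)%Z -> (m < Z.b2z c1 + Z.b2z c2 + Z.b2z c3)%Z ->
  exists b1 b2 b3 : bool, (b1 = true -> c1 = true) /\ (b2 = true -> c2 = true) /\
    (b3 = true -> c3 = true) /\ (Z.b2z b1 + Z.b2z b2 + Z.b2z b3 = m)%Z /\
    ((b1 = false /\ c1 = true) \/ (b2 = false /\ c2 = true) \/ (b3 = false /\ c3 = true)).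
Proof.
  intros H1 H2. destruct c1, c2, c3; simpl in H2;
  (assert (m = 0 \/ m = 1 \/ m = 2)%Z as [->|[->| ->]] by lia); try lia;
  first [ exists false, false, false; simpl; intuition congruence
        | exists true, false, false; simpl; intuition congruence
        | exists false, true, false; simpl; intuition congruence
        | exists true, true, false; simpl; intuition congruence ].
Qed.
Lemma min3 a b c : 0 < a -> 0 < b -> 0 < c -> exists d, 0 < d /\ d <= a /\ d <= b /\ d <= c.
Proof. intros. exists (Rmin (Rmin a b) c). unfold Rmin; repeat destruct Rle_dec; lra. Qed.

Lemma min6 a b c d e f : 0 < a -> 0 < b -> 0 < c -> 0 < d -> 0 < e -> 0 < f ->
  exists m, 0 < m /\ m <= a /\ m <= b /\ m <= c /\ m <= d /\ m <= e /\ m <= f.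
Proof.
  intros. destruct (min3 a b c) as [u Hu]; auto. destruct (min3 d e f) as [v Hv]; auto.
  exists (Rmin u v). unfold Rmin; destruct Rle_dec; lra.
Qed.

Lemma bumpc y c (b : bool) eta :
  (b = true -> c = true) ->
  (c = true -> forall eta, 0 < eta < 1 -> ceilZ (y + eta) = (ceilZ y + 1)%Z) ->
  0 < eta < 1 ->
  ceilZ (y + (if b then eta else 0)) = (ceilZ y + Z.b2z b)%Z.
Proof.
  intros Hb B He. destruct b.
  - rewrite B; auto.
  - rewrite Rplus_0_r. simpl. lia.
Qed.

Lemma bumpd y (b : bool) eta eps : 0 < eta < eps ->
  Rabs (y + (if b then eta else 0) - y) < eps.
Proof.
  intros. replace (y + (if b then eta else 0) - y) with (if b then eta else 0) by (destruct b; ring).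
  destruct b; [rewrite Rabs_pos_eq|rewrite Rabs_R0]; lra.
Qed.

Lemma good_closure p : good p -> staircase p.
Proof.
  destruct p as [y1 y2 y3]. unfold good, Fv, Hv; simpl. intros [HF HH] eps Heps.
  destruct (int_ind y1) as [c1 [I1 [C1 B1]]].
  destruct (int_ind y2) as [c2 [I2 [C2 B2]]].
  destruct (int_ind y3) as [c3 [I3 [C3 B3]]].
  destruct (comb c1 c2 c3 (- (ceilZ y1 + ceilZ y2 + ceilZ y3))) as
    [b1 [b2 [b3 [Hb1 [Hb2 [Hb3 [Hs Hex]]]]]]]; [lia|lia|].
  set (eta := Rmin (eps/2) (1/2)).
  assert (He : 0 < eta < 1 /\ eta < eps) by (unfold eta, Rmin; destruct Rle_dec; lra).
  exists (mkV3 (y1 + (if b1 then eta else 0)) (y2 + (if b2 then eta else 0)) (y3 + (if b3 then eta else 0))).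
  simpl. split; [|split; [|split]]; try (apply bumpd; lra).
  unfold stair_pre; simpl. split.
  - rewrite (bumpc y1 c1 b1 eta), (bumpc y2 c2 b2 eta), (bumpc y3 c3 b3 eta); auto; try lra. lia.
  - destruct Hex as [[-> Ec]|[[-> Ec]|[-> Ec]]]; rewrite Rplus_0_r; auto.
Qed.

Lemma closure_good p : staircase p -> good p.
Proof.
  destruct p as [y1 y2 y3]. unfold staircase, closure3. simpl. intros H.
  destruct (ceil_spec y1), (ceil_spec y2), (ceil_spec y3).
  destruct (floor_spec y1), (floor_spec y2), (floor_spec y3).
  destruct (min6 (y1 - IZR (ceilZ y1) + 1) (y2 - IZR (ceilZ y2) + 1) (y3 - IZR (ceilZ y3) + 1)
    (IZR (Int_part y1) + 1 - y1) (IZR (Int_part y2) + 1 - y2) (IZR (Int_part y3) + 1 - y3))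
    as [e He]; try lra.
  destruct (H e) as [[a1 a2 a3] [[Hs Hi] [D1 [D2 D3]]]]; [lra|]. simpl in *.
  apply Rabs_def2 in D1, D2, D3.
  assert (L1 := ceil_lsc y1 a1 ltac:(lra)).
  assert (L2 := ceil_lsc y2 a2 ltac:(lra)).
  assert (L3 := ceil_lsc y3 a3 ltac:(lra)).
  assert (U1 := ceil_le (Int_part y1 + 1) a1 ltac:(zr; lra)).
  assert (U2 := ceil_le (Int_part y2 + 1) a2 ltac:(zr; lra)).
  assert (U3 := ceil_le (Int_part y3 + 1) a3 ltac:(zr; lra)).
  unfold good, Fv, Hv; simpl.
  destruct Hi as [[n E]|[[n E]|[n E]]]; subst; rewrite ceil_IZR in *.
  - assert (n < Int_part y1 + 1)%Z by (apply ltZ; zr; lra). lia.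
  - assert (n < Int_part y2 + 1)%Z by (apply ltZ; zr; lra). lia.
  - assert (n < Int_part y3 + 1)%Z by (apply ltZ; zr; lra). lia.
Qed.

Lemma staircase_iff p : staircase p <-> good p.
Proof. split; [apply closure_good|apply good_closure]. Qed.

Definition shift (b : V3 R) (t : R) : V3 R := mkV3 (x1 b + t) (x2 b + t) (x3 b + t).

Lemma mono b b' t s : x1 b <= x1 b' -> x2 b <= x2 b' -> x3 b <= x3 b' ->
  good (shift b t) -> good (shift b' s) -> s <= t.
Proof.
  intros H1 H2 H3 G G'. destruct (Rle_dec s t) as [|n]; auto. exfalso.
  apply Rnot_le_lt in n. unfold good, Fv, Hv, shift in *; simpl in *.
  assert (A1 := lt_floor_ceil (x1 b + t) (x1 b' + s) ltac:(lra)).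
  assert (A2 := lt_floor_ceil (x2 b + t) (x2 b' + s) ltac:(lra)).
  assert (A3 := lt_floor_ceil (x3 b + t) (x3 b' + s) ltac:(lra)).
  lia.
Qed.

Lemma exists_t b : exists t, good (shift b t).
Proof.
  set (E := fun t => (Fv (shift b t) <= 0)%Z).
  assert (Hb : bound E).
  { exists (- (x1 b + x2 b + x3 b) / 3). intros t Et. unfold E, Fv, shift in Et; simpl in Et.
    apply IZR_le in Et. zr.
    destruct (ceil_spec (x1 b + t)), (ceil_spec (x2 b + t)), (ceil_spec (x3 b + t)). lra. }
  assert (Hne : exists t, E t).
  { exists (- (Rabs (x1 b) + Rabs (x2 b) + Rabs (x3 b)) - 1).
    unfold E, Fv, shift; simpl. set (t0 := - (Rabs (x1 b) + Rabs (x2 b) + Rabs (x3 b)) - 1).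
    destruct (ceil_spec (x1 b + t0)), (ceil_spec (x2 b + t0)), (ceil_spec (x3 b + t0)).
    pose proof (Rle_abs (x1 b)). pose proof (Rle_abs (x2 b)). pose proof (Rle_abs (x3 b)).
    pose proof (Rabs_pos (x1 b)). pose proof (Rabs_pos (x2 b)). pose proof (Rabs_pos (x3 b)).
    assert (ceilZ (x1 b + t0) + ceilZ (x2 b + t0) + ceilZ (x3 b + t0) < 1)%Z
      by (apply ltZ; zr; unfold t0 in *; lra). lia. }
  destruct (completeness E Hb Hne) as [m [Hub Hl]].
  exists m. unfold good. split.
  - destruct (ceil_spec (x1 b + m)), (ceil_spec (x2 b + m)), (ceil_spec (x3 b + m)).
    destruct (min3 (x1 b + m - IZR (ceilZ (x1 b + m)) + 1) (x2 b + m - IZR (ceilZ (x2 b + m)) + 1)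
      (x3 b + m - IZR (ceilZ (x3 b + m)) + 1)) as [d Hd]; try lra.
    destruct (classic (exists s, E s /\ m - d < s)) as [[s [Es Hs]]|N].
    + assert (s <= m) by (apply Hub; auto).
      unfold E, Fv, shift in Es |- *; simpl in *.
      rewrite (ceil_unique (x1 b + s) (ceilZ (x1 b + m))) in Es by lra.
      rewrite (ceil_unique (x2 b + s) (ceilZ (x2 b + m))) in Es by lra.
      rewrite (ceil_unique (x3 b + s) (ceilZ (x3 b + m))) in Es by lra.
      exact Es.
    + exfalso. assert (m <= m - d); [|lra]. apply Hl. intros s Es.
      apply Rnot_lt_le. intros Hs. apply N. exists s; auto.
  - destruct (floor_spec (x1 b + m)), (floor_spec (x2 b + m)), (floor_spec (x3 b + m)).
    destruct (min3 (IZR (Int_part (x1 b + m)) + 1 - (x1 b + m)) (IZR (Int_part (x2 b + m)) + 1 - (x2 b + m))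
      (IZR (Int_part (x3 b + m)) + 1 - (x3 b + m))) as [d Hd]; try lra.
    set (s := m + d / 2).
    assert (NE : ~ E s) by (intros Es; assert (s <= m) by (apply Hub; auto); unfold s in *; lra).
    unfold E, Fv, shift in NE |- *; unfold Hv, shift; simpl in *.
    rewrite (ceil_unique (x1 b + s) (Int_part (x1 b + m) + 1)) in NE by (zr; unfold s; lra).
    rewrite (ceil_unique (x2 b + s) (Int_part (x2 b + m) + 1)) in NE by (zr; unfold s; lra).
    rewrite (ceil_unique (x3 b + s) (Int_part (x3 b + m) + 1)) in NE by (zr; unfold s; lra).
    lia.
Qed.
Definition base q1 q2 := mkV3 q1 (- q1 - q2) q2.

Lemma gamma_good q1 q2 : good (shift (base q1 q2) (gamma_t q1 q2)).
Proof.
  apply staircase_iff. unfold gamma_t.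
  apply (epsilon_spec (inhabits 0%R) (fun t => staircase (mkV3 (q1 + t) (- q1 - q2 + t) (q2 + t)))).
  destruct (exists_t (base q1 q2)) as [t Ht]. exists t. apply staircase_iff. exact Ht.
Qed.

Lemma gamma_uniq q1 q2 t : good (shift (base q1 q2) t) -> gamma_t q1 q2 = t.
Proof.
  intros H. pose proof (gamma_good q1 q2).
  apply Rle_antisym; eapply mono; eauto; apply Rle_refl.
Qed.

Lemma good_ext p p' : x1 p = x1 p' -> x2 p = x2 p' -> x3 p = x3 p' -> good p -> good p'.
Proof. destruct p, p'; simpl; intros -> -> ->; auto. Qed.

Lemma good_trans p p' n1 n2 n3 : x1 p' = x1 p + IZR n1 -> x2 p' = x2 p + IZR n2 ->
  x3 p' = x3 p + IZR n3 -> (n1 + n2 + n3 = 0)%Z -> good p -> good p'.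
Proof.
  intros H1 H2 H3 Hn. unfold good, Fv, Hv. rewrite H1, H2, H3, !ceil_addZ, !floor_addZ. lia.
Qed.

Lemma gamma_cont q1 q2 q1' q2' d : Rabs (q1 - q1') < d -> Rabs (q2 - q2') < d ->
  gamma_t q1 q2 - 2 * d <= gamma_t q1' q2' <= gamma_t q1 q2 + 2 * d.
Proof.
  intros D1 D2. apply Rabs_def2 in D1, D2.
  pose proof (gamma_good q1 q2) as G. pose proof (gamma_good q1' q2') as G'.
  set (t := gamma_t q1 q2) in *. set (t' := gamma_t q1' q2') in *.
  split.
  - apply (mono (base q1' q2') (mkV3 (q1 + 2*d) (- q1 - q2 + 2*d) (q2 + 2*d))); simpl; try lra; auto.
    revert G. apply good_ext; simpl; ring.
  - apply (mono (mkV3 (q1 - 2*d) (- q1 - q2 - 2*d) (q2 - 2*d)) (base q1' q2')); simpl; try lra; auto.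
    revert G. apply good_ext; simpl; ring.
Qed.

Lemma face_ceil a (fx : bool) x : coord_face a fx x ->
  ceilZ x = (if fx then a else a + 1)%Z /\ ceilZ (- x) = (- a)%Z.
Proof.
  unfold coord_face. destruct fx; intros H.
  - subst. rewrite <- opp_IZR, !ceil_IZR. auto.
  - split; apply ceil_unique; zr; lra.
Qed.

Lemma dist_bd p p' e : dist6 p p' < e -> Rabs (e1 p - e1 p') < e /\ Rabs (e3 p - e3 p') < e.
Proof.
  unfold dist6. intros H.
  set (A := Rabs (e1 p - e1 p')) in *. set (B := Rabs (e2 p - e2 p')) in *. set (C := Rabs (e3 p - e3 p')) in *.
  set (D := Rmax (Rmax (Rabs (e4 p - e4 p')) (Rabs (e5 p - e5 p'))) (Rabs (e6 p - e6 p'))) in *.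
  pose proof (Rmax_l A B). pose proof (Rmax_l (Rmax A B) C). pose proof (Rmax_r (Rmax A B) C).
  pose proof (Rmax_l (Rmax (Rmax A B) C) D). split; lra.
Qed.

Theorem lemma5p8 (psi : V6 R -> V6 Z) :
  (forall q1 q2 : R,
     let g := gamma q1 q2 in
     psi (iotaR q1 q2) =
       mkV6 (ceilZ (x1 g)) (ceilZ (x2 g)) (ceilZ (x3 g))
            (ceilZ (- x1 g)) (ceilZ (- x2 g)) (ceilZ (- x3 g))) ->
  compatible_stratification psi.
Proof.
  intros Hpsi0.
  assert (Hpsi : forall q1 q2, psi (iotaR q1 q2) =
       mkV6 (ceilZ (x1 (gamma q1 q2))) (ceilZ (x2 (gamma q1 q2))) (ceilZ (x3 (gamma q1 q2)))
            (ceilZ (- x1 (gamma q1 q2))) (ceilZ (- x2 (gamma q1 q2))) (ceilZ (- x3 (gamma q1 q2))))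
    by (intros; exact (Hpsi0 q1 q2)).
  clear Hpsi0.
  split; [|split].
  - intros U HU p Hp [q1 [q2 ->]].
    set (t := gamma_t q1 q2).
    set (g1 := q1 + t). set (g2 := - q1 - q2 + t). set (g3 := q2 + t).
    destruct (ceil_spec g1), (ceil_spec g2), (ceil_spec g3),
      (ceil_spec (- g1)), (ceil_spec (- g2)), (ceil_spec (- g3)).
    destruct (min6 (g1 - IZR (ceilZ g1) + 1) (g2 - IZR (ceilZ g2) + 1) (g3 - IZR (ceilZ g3) + 1)
      (- g1 - IZR (ceilZ (- g1)) + 1) (- g2 - IZR (ceilZ (- g2)) + 1) (- g3 - IZR (ceilZ (- g3)) + 1))
      as [dl Hdl]; try lra.
    exists (dl / 4). split; [lra|].
    intros p' [q1' [q2' ->]] Hd.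
    apply dist_bd in Hd. simpl in Hd. destruct Hd as [D1 D2].
    destruct (gamma_cont q1 q2 q1' q2' (dl/4)) as [T1 T2]; auto.
    apply Rabs_def2 in D1, D2.
    apply (HU (psi (iotaR q1 q2))); auto.
    rewrite !Hpsi. unfold gamma. cbv zeta. cbn [x1 x2 x3].
    fold t. fold g1 g2 g3. set (t' := gamma_t q1' q2') in *.
    unfold leZ6; cbn [e1 e2 e3 e4 e5 e6].
    destruct D1, D2. unfold g1, g2, g3, t in *.
    repeat split; apply ceil_lsc; lra.
  - intros a f p p' [q1 [q2 [-> [_ [F1 [F2 F3]]]]]] [q1' [q2' [-> [_ [F1' [F2' F3']]]]]].
    rewrite !Hpsi.
    destruct (face_ceil _ _ _ F1) as [-> ->], (face_ceil _ _ _ F2) as [-> ->],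
      (face_ceil _ _ _ F3) as [-> ->], (face_ceil _ _ _ F1') as [-> ->],
      (face_ceil _ _ _ F2') as [-> ->], (face_ceil _ _ _ F3') as [-> ->].
    reflexivity.
  - intros p v [q1 [q2 ->]] [a [b ->]].
    replace (addR6 (iotaR q1 q2) (realZ6 (iotaZ a b))) with (iotaR (q1 + IZR a) (q2 + IZR b))
      by (unfold addR6, iotaR, realZ6, iotaZ; cbn [e1 e2 e3 e4 e5 e6]; f_equal; zr; ring).
    rewrite !Hpsi.
    assert (Ht : gamma_t (q1 + IZR a) (q2 + IZR b) = gamma_t q1 q2).
    { apply gamma_uniq. apply (good_trans (shift (base q1 q2) (gamma_t q1 q2)) _ a (- a - b) b); [simpl; zr; ring ..| lia | apply gamma_good]. }
    unfold gamma. cbv zeta. cbn [x1 x2 x3]. rewrite Ht.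
    unfold addZ6, iotaZ; cbn [e1 e2 e3 e4 e5 e6].
    f_equal; rewrite <- ceil_addZ; f_equal; zr; ring.
Qed.
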